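(* Let $T$ be a compact torus with Lie algebra $\mathfrak t$ and cocharacter lattice $\mathfrak t_{\mathbb Z}\subset\mathfrak t$, let $a_1,\dots,a_n$ be the weights of $T$ on a Lagrangian half of the representation $V$ as in the context, and let $R^+$ be the set of positive roots of $G$ with respect to $T$. Define $$\Delta(\beta)=\frac12\sum_{j=1}^n|a_j(\beta)|-\sum_{\alpha\in R^+}|\alpha(\beta)|,\qquad\beta\in\mathfrak t.$$ Then $\Delta(\beta)>0$ for all nonzero $\beta\in\mathfrak t$ if and only if $\Delta(\beta)>0$ for all nonzero $\beta\in\mathfrak t_{\mathbb Z}$.
   Context: $G$ is a connected compact Lie group with maximal torus $T$, acting on a complex symplectic vector space $(V,\Omega)$ of dimension $2n$ through $USp(V,\Omega)$. A Darboux basis $x_1,\dots,x_n,y_1,\dots,y_n$ of $T$-weight vectors is fixed with $\beta x_j=-a_j(\beta)x_j$, $\beta y_j=a_j(\beta)y_j$ for $\beta\in\mathfrak t$; the $a_j$ and the roots $\alpha\in R^+$ are linear functionals on $\mathfrak t$ (with imaginary values) which take values in $i\mathbb Q$ (up to a fixed common normalization, values in a rational multiple of $i\mathbb Z$) on $\mathfrak t_{\mathbb Z}$. *)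

(* Defs.v *)
From HB Require Import structures.
From mathcomp Require Import all_boot all_order all_algebra.
From mathcomp Require Import reals.
Set Implicit Arguments. Unset Strict Implicit. Unset Printing Implicit Defensive.
Import Order.TTheory GRing.Theory Num.Theory.
Local Open Scope ring_scope.

(* t is identified with R^r via a Z-basis of the cocharacter lattice t_Z,
   so t_Z = integer row vectors.  A linear functional on t taking values in
   i*Q on t_Z is i times a real functional with rational coefficients c;
   its absolute value at beta is |sum_k c_k beta_k|. *)
Definition lin (R : realType) (r : nat) (c : 'rV[rat]_r) (beta : 'rV[R]_r) : R :=
  \sum_(k < r) ratr (c 0 k) * beta 0 k.

Definition Delta (R : realType) (r n m : nat)
  (a : 'I_n -> 'rV[rat]_r) (alpha : 'I_m -> 'rV[rat]_r) (beta : 'rV[R]_r) : R :=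
  2^-1 * (\sum_(j < n) `|lin (a j) beta|) - \sum_(i < m) `|lin (alpha i) beta|.

(* Main.v *)
Require Import Defs.
From HB Require Import structures.
From mathcomp Require Import all_boot all_order all_algebra.
From mathcomp Require Import reals.
From mathcomp Require Import ring lra.
Import Order.TTheory GRing.Theory Num.Theory.
Set Implicit Arguments. Unset Strict Implicit. Unset Printing Implicit Defensive.
Local Open Scope ring_scope.

Section Aux.
Variable R : realType.

Definition nearR r (b : 'rV[R]_r) (P : 'rV[R]_r -> Prop) :=
  exists2 e : R, 0 < e & forall y : 'rV[R]_r, (forall i, `|y 0 i - b 0 i| < e) -> P y.

Lemma nearR_and r (b : 'rV[R]_r) (P Q : 'rV[R]_r -> Prop) :
  nearR b P -> nearR b Q -> nearR b (fun y => P y /\ Q y).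
Proof.
move=> [e1 e1p H1] [e2 e2p H2]; exists (Num.min e1 e2).
  by rewrite lt_min e1p e2p.
move=> y Hy; split.
  by apply: H1 => i; apply: lt_le_trans (Hy i) _; rewrite ge_min lexx.
by apply: H2 => i; apply: lt_le_trans (Hy i) _; rewrite ge_min lexx orbT.
Qed.

Lemma nearR_impl r (b : 'rV[R]_r) (P Q : 'rV[R]_r -> Prop) :
  (forall y, P y -> Q y) -> nearR b P -> nearR b Q.
Proof. by move=> PQ [e ep H]; exists e => // y /H /PQ. Qed.

Lemma nearR_all r (b : 'rV[R]_r) (I : finType) (P : I -> 'rV[R]_r -> Prop) :
  (forall i, nearR b (P i)) -> nearR b (fun y => forall i, P i y).
Proof.
move=> H.
have: forall s : seq I, nearR b (fun y => forall i, i \in s -> P i y).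
  elim=> [|i s IH]; first by exists 1 => // y _ i.
  apply: nearR_impl (nearR_and (H i) IH) => y [Pi Ps] j.
  by rewrite in_cons => /orP [/eqP -> //|/Ps].
move=> /(_ (enum I)); apply: nearR_impl => y Hy i; apply: Hy; by rewrite mem_enum.
Qed.

Lemma lin_cont r (g : 'rV[rat]_r) (c : 'rV[R]_r) (d : R) : 0 < d ->
  nearR c (fun y => `|lin g y - lin g c| < d).
Proof.
move=> dp.
set C := \sum_(k < r) `|(ratr (g 0 k) : R)|.
have C0 : 0 <= C by apply: sumr_ge0 => k _.
exists (d / (C + 1)); first by rewrite divr_gt0 // ltr_wpDl.
move=> y Hy.
have -> : lin g y - lin g c = \sum_(k < r) ratr (g 0 k) * (y 0 k - c 0 k).
  by rewrite /lin -sumrB; apply: eq_bigr => k _; rewrite mulrBr.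
apply: le_lt_trans (ler_norm_sum _ _ _) _.
apply: (@le_lt_trans _ _ (C * (d / (C + 1)))).
  rewrite /C mulr_suml; apply: ler_sum => k _; rewrite normrM.
  by apply: ler_wpM2l => //; apply: ltW.
rewrite mulrA ltr_pdivrMr ?ltr_wpDl //.
nra.
Qed.

Lemma rat_dense (y e : R) : 0 < e -> exists q : rat, `|ratr q - y| < e.
Proof.
move=> ep.
set N := Num.bound (e^-1).
have HN : e^-1 < N%:R by apply: archi_boundP; rewrite invr_ge0 ltW.
have N0 : (0 : R) < N%:R by apply: le_lt_trans HN; rewrite invr_ge0 ltW.
exists ((Num.floor (y * N%:R))%:~R / N%:R).
rewrite rmorphM /= fmorphV /= ratr_int ratr_nat.
have := floor_itv (y * N%:R); rewrite intrD /= => /andP [h1 h2].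
have ee : e * e^-1 = 1 by rewrite mulfV // lt0r_neq0.
have eN : 1 < e * N%:R by nra.
set f : R := (Num.floor (y * N%:R))%:~R.
have -> : f / N%:R - y = (f - y * N%:R) / N%:R by field; rewrite lt0r_neq0.
rewrite normrM normfV (gtr0_norm N0) ltr_pdivrMr //.
rewrite ltr_distlC; apply/andP; split; lra.
Qed.

Lemma near_mx r s (K : 'M[rat]_(s, r)) (c : 'rV[R]_s) (P : 'rV[R]_r -> Prop) :
  nearR (c *m map_mx ratr K) P -> nearR c (fun c' => P (c' *m map_mx ratr K)).
Proof.
move=> [e ep H].
have : nearR c (fun y => forall i, `|lin (\row_j K j i) y - lin (\row_j K j i) c| < e).
  by apply: nearR_all => i; apply: lin_cont.
apply: nearR_impl => y Hy; apply: H => i.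
have E : forall z : 'rV[R]_s, (z *m map_mx ratr K) 0 i = lin (\row_j K j i) z.
  by move=> z; rewrite !mxE /lin; apply: eq_bigr => k _; rewrite !mxE mulrC.
by rewrite !E.
Qed.

Lemma nearR_rat s (c : 'rV[R]_s) (P : 'rV[R]_s -> Prop) :
  nearR c P -> exists d : 'rV[rat]_s, P (map_mx ratr d).
Proof.
move=> [e ep H].
have : forall i, exists q : rat, `|ratr q - c 0 i| < e by move=> i; apply: rat_dense.
move=> /fin_all_exists [q Hq]; exists (\row_i q i); apply: H => i.
by rewrite !mxE.
Qed.

Lemma approx (I : finType) r (G : I -> 'rV[rat]_r) (b : 'rV[R]_r) (P : 'rV[R]_r -> Prop) :
  (forall o, lin (G o) b = 0) -> nearR b P ->
  exists y : 'rV[R]_r, [/\ (exists x : 'rV[rat]_r, y = map_mx ratr x),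
     (forall o, lin (G o) y = 0) & P y].
Proof.
move=> HG Hn.
pose M : 'M[rat]_(r, #|{: I}|) := \matrix_(k, l) G (enum_val l) 0 k.
have linM : forall (y : 'rV[R]_r) o, lin (G o) y = (y *m map_mx ratr M) 0 (enum_rank o).
  move=> y o; rewrite !mxE /lin; apply: eq_bigr => k _.
  by rewrite !mxE enum_rankK mulrC.
have bM : b *m map_mx ratr M = 0.
  by apply/rowP => l; rewrite -(enum_valK l) -linM HG mxE.
have : (b <= kermx (map_mx ratr M))%MS by apply/sub_kermxP.
rewrite -map_kermx => /submxP [c bc].
rewrite bc in Hn; have [d Hd] := nearR_rat (near_mx Hn).
exists (map_mx ratr d *m map_mx ratr (kermx M)); split => //.
  by exists (d *m kermx M); rewrite [RHS]map_mxM.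
move=> o; rewrite linM -mulmxA -map_mxM mulmx_ker map_mx0 mulmx0 mxE //.
Qed.

Lemma linD r (c1 c2 : 'rV[rat]_r) (y : 'rV[R]_r) : lin (c1 + c2) y = lin c1 y + lin c2 y.
Proof. by rewrite /lin -big_split; apply: eq_bigr => k _; rewrite mxE rmorphD mulrDl. Qed.

Lemma linZ r k (c : 'rV[rat]_r) (y : 'rV[R]_r) : lin (k *: c) y = ratr k * lin c y.
Proof. by rewrite /lin mulr_sumr; apply: eq_bigr => i _; rewrite mxE rmorphM mulrA. Qed.

Lemma lin0 r (y : 'rV[R]_r) : lin 0 y = 0.
Proof. by rewrite /lin big1 // => i _; rewrite mxE rmorph0 mul0r. Qed.

Lemma linN r (c : 'rV[rat]_r) (y : 'rV[R]_r) : lin (- c) y = - lin c y.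
Proof. by rewrite -scaleN1r linZ rmorphN1 mulN1r. Qed.

Lemma lin_sum r (I : finType) (F : I -> 'rV[rat]_r) (y : 'rV[R]_r) :
  lin (\sum_i F i) y = \sum_i lin (F i) y.
Proof.
apply: (big_ind2 (fun c v => lin c y = v)); first exact: lin0.
  by move=> c1 v1 c2 v2 <- <-; rewrite linD.
by [].
Qed.

Lemma linZr r k (c : 'rV[rat]_r) (y : 'rV[R]_r) : lin c (k *: y) = k * lin c y.
Proof. by rewrite /lin mulr_sumr; apply: eq_bigr => i _; rewrite mxE mulrCA. Qed.

Lemma Delta_scale r n m (a : 'I_n -> 'rV[rat]_r) (alpha : 'I_m -> 'rV[rat]_r) k (y : 'rV[R]_r) :
  0 <= k -> Delta a alpha (k *: y) = k * Delta a alpha y.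
Proof.
move=> k0; rewrite /Delta mulrBr; congr (_ - _).
  rewrite mulrCA; congr (_ * _); rewrite mulr_sumr; apply: eq_bigr => i _.
  by rewrite linZr normrM ger0_norm.
rewrite mulr_sumr; apply: eq_bigr => i _.
by rewrite linZr normrM ger0_norm.
Qed.

Definition sgr (t : R) : rat := if 0 < t then 1 else if t < 0 then -1 else 0.

Lemma sgr_abs (t t' : R) : (0 < t -> 0 < t') -> (t < 0 -> t' < 0) -> (t = 0 -> t' = 0) ->
  `|t'| = ratr (sgr t) * t'.
Proof.
rewrite /sgr; case: (ltgtP t 0) => [tn|tp|->] h1 h2 h3.
- by rewrite ltr0_norm ?h2 // rmorphN1 mulN1r.
- by rewrite gtr0_norm ?h1 // rmorph1 mul1r.
- by rewrite h3 // normr0 mulr0.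
Qed.

Lemma int_scale r (x : 'rV[rat]_r) : exists2 d : int, 0 < d &
  exists z : 'rV[int]_r, map_mx (fun v : int => v%:~R : R) z = d%:~R *: map_mx ratr x.
Proof.
exists (\prod_k denq (x 0 k)); first by apply: prodr_gt0 => k _; apply: denq_gt0.
exists (\row_k (numq (x 0 k) * \prod_(k' | k' != k) denq (x 0 k'))).
apply/rowP => k; rewrite !mxE [in RHS](bigD1 k) //= /ratr !intrM.
by field; rewrite intr_eq0 denq_neq0.
Qed.
End Aux.

Theorem mainTheorem5 (R : realType) (r n m : nat)
  (a : 'I_n -> 'rV[rat]_r) (alpha : 'I_m -> 'rV[rat]_r) :
  (forall beta : 'rV[R]_r, beta != 0 -> 0 < Delta a alpha beta) <->
  (forall z : 'rV[int]_r, z != 0 -> 0 < Delta a alpha (map_mx (fun x : int => x%:~R : R) z)).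
Proof.
split.
  move=> H z z0; apply: H; apply: contraNneq z0 => h.
  apply/eqP/rowP => j; move/rowP: h => /(_ j); rewrite !mxE => /eqP.
  by rewrite intr_eq0 => /eqP.
move=> H b b0; case: (ltP 0 (Delta a alpha b)) => // Hle; exfalso.
have [i0 Hi0] : exists i0, b 0 i0 != 0.
  case: (pickP (fun i => b 0 i != 0)) => [i Hi|H0]; first by exists i.
  exfalso; apply: (negP b0); apply/eqP/rowP => i; move: (H0 i) => /negbFE/eqP; rewrite mxE //.
pose D : 'rV[rat]_r := 2^-1 *: \sum_j sgr (lin (a j) b) *: a j
                       - \sum_i sgr (lin (alpha i) b) *: alpha i.
pose G (o : option ('I_n + 'I_m)) : 'rV[rat]_r :=
  match o with None => D | Some (inl j) => a j | Some (inr i) => alpha i end.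
pose G' o := if lin (G o) b == 0 then G o else 0.
have HG' : forall o, lin (G' o) b = 0.
  by move=> o; rewrite /G'; case: eqP => // _; rewrite lin0.
have Hn : nearR b (fun y => (forall o, (0 < lin (G o) b -> 0 < lin (G o) y) /\
                                    (lin (G o) b < 0 -> lin (G o) y < 0)) /\ y 0 i0 != 0).
  apply: nearR_and.
    apply: nearR_all => o.
    case: (eqVneq (lin (G o) b) 0) => h.
      by exists 1 => // y _; rewrite h ltxx.
    have hp : 0 < `|lin (G o) b| by rewrite normr_gt0.
    apply: nearR_impl (lin_cont (G o) b hp) => y.
    rewrite ltr_distlC => /andP [h1 h2]; split => hb.
      by rewrite (gtr0_norm hb) in h2; lra.
    by rewrite (ltr0_norm hb) in h1; lra.
  exists `|b 0 i0|; first by rewrite normr_gt0.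
  move=> y /(_ i0); apply: contraTneq => ->; by rewrite sub0r normrN ltxx.
have [y [[x yE] Hker [HP Hy0]]] := approx HG' Hn.

have C : forall o, `|lin (G o) y| = ratr (sgr (lin (G o) b)) * lin (G o) y.
  move=> o; apply: sgr_abs; try by case: (HP o).
  by move=> h; move: (Hker o); rewrite /G' h eqxx.
have Cb : forall o, `|lin (G o) b| = ratr (sgr (lin (G o) b)) * lin (G o) b.
  by move=> o; apply: sgr_abs.
have DE : forall v : 'rV[R]_r, (forall o, `|lin (G o) v| = ratr (sgr (lin (G o) b)) * lin (G o) v) ->
    Delta a alpha v = lin D v.
  move=> v Cv; rewrite /D linD linN !linZ !lin_sum /Delta fmorphV rmorph_nat.
  congr (_ * _ - _).
    by apply: eq_bigr => j _; rewrite linZ (Cv (Some (inl j))).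
  by apply: eq_bigr => i _; rewrite linZ (Cv (Some (inr i))).
have Dy : Delta a alpha y <= 0.
  rewrite DE //.
  have Db : lin (G None) b <= 0 by rewrite /= -DE.
  case: (ltgtP (lin (G None) b) 0) Db => // h _.
    by apply: ltW; apply: (proj2 (HP None)).
  by move: (Hker None); rewrite /G' h eqxx => ->.
have [d d0 [z zE]] := @int_scale R r x; rewrite -yE in zE.
have := H z; rewrite zE Delta_scale ?ler0z ?ltW //.
have : 0 <= d%:~R * - Delta a alpha y :> R by apply: mulr_ge0; [rewrite ler0z ltW | rewrite oppr_ge0].
rewrite mulrN oppr_ge0 => h1 h2.
have : 0 < (d%:~R * Delta a alpha y : R).
  apply: h2; apply: contraNneq Hy0 => z0.
  move: zE; rewrite z0 => /rowP /(_ i0); rewrite !mxE => /esym /eqP.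
  by rewrite mulf_eq0 intr_eq0 gt_eqF.
by rewrite ltNge h1.
Qed.
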